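(* Let $\beta=\langle\beta_1,\beta_*,a\mapsto\tau_a\rangle:Y\to FY$ be an $F$-coalgebra in $\mathbf{Meas}$ (so $\beta_1,\beta_*:Y\to\mathbb I$ and $\tau_a:Y\to Y$ are measurable). The following are equivalent: (i) there exists an $F$-coalgebra morphism $[\![-]\!]$ from $(Y,\beta)$ to $(\mathbb DA^\infty,\Pi)$, i.e. a measurable map $[\![-]\!]:Y\to\mathbb DA^\infty$ with $\Pi\circ[\![-]\!]=F[\![-]\!]\circ\beta$; (ii) for all $y\in Y$, $\beta_1(y)=\beta_*(y)+\sum_{a\in A}\beta_1(\tau_a(y))$. Moreover, in this case the morphism in (i) is unique.
   Context: Work in $\mathbf{Meas}$. $\mathbb I=[0,1]$ with Borel $\sigma$-algebra; $A$ finite alphabet; $A^\infty=A^*\cup A^\omega$ (finite and infinite words, empty word $\varepsilon$) with $\sigma$-algebra $\Sigma_{A^\infty}$ generated by $S_\infty=\{\emptyset\}\cup\{\{w\}\mid w\in A^*\}\cup\{wA^\infty\mid w\in A^*\}$, where $wS=\{wv\mid v\in S\}$. $\mathbb DA^\infty$ is the set of sub-probability measures on $A^\infty$ with the $\sigma$-algebra generated by the maps $m\mapsto m(S)$, $S\in\Sigma_{A^\infty}$. The measure derivative of $m$ w.r.t. $a\in A$ is $m_a(S)=m(aS)$. $F$ is the functor $FX=\mathbb I\times\mathbb I\times X^A$ (product $\sigma$-algebra), $Ff=\mathrm{id}_{\mathbb I}\times\mathrm{id}_{\mathbb I}\times f^A$. $\Pi:\mathbb DA^\infty\to F\mathbb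 DA^\infty$ is $\Pi(m)=\langle m(A^\infty),\ m(\{\varepsilon\}),\ a\mapsto m_a\rangle$. *)

(* Defs.v *)
From Stdlib Require Import Reals List.
Open Scope R_scope.
Set Implicit Arguments.

Inductive generated (T : Type) (G : (T -> Prop) -> Prop) : (T -> Prop) -> Prop :=
| gen_base : forall S, G S -> generated G S
| gen_empty : generated G (fun _ => False)
| gen_compl : forall S, generated G S -> generated G (fun x => ~ S x)
| gen_union : forall F : nat -> T -> Prop,
    (forall n, generated G (F n)) -> generated G (fun x => exists n, F n x)
| gen_ext : forall S S', generated G S -> (forall x, S x <-> S' x) -> generated G S'.

Definition sigma_algebra (T : Type) (M : (T -> Prop) -> Prop) : Prop :=
  M (fun _ => False)
  /\ (forall S, M S -> M (fun x => ~ S x))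
  /\ (forall F : nat -> T -> Prop, (forall n, M (F n)) -> M (fun x => exists n, F n x))
  /\ (forall S S', M S -> (forall x, S x <-> S' x) -> M S').

Definition measurable_fun (X Z : Type) (MX : (X -> Prop) -> Prop)
  (MZ : (Z -> Prop) -> Prop) (f : X -> Z) : Prop :=
  forall B, MZ B -> MX (fun x => B (f x)).

(** Borel sigma-algebra on R (the Borel sets of I=[0,1] are its traces). *)
Definition borel : (R -> Prop) -> Prop :=
  generated (fun B => exists a : R, forall x, B x <-> x <= a).

Definition word (A : Type) : Type := (list A + (nat -> A))%type.

Definition weq (A : Type) (u v : word A) : Prop :=
  match u, v with
  | inl l, inl l' => l = l'
  | inr f, inr g => forall n, f n = g n
  | _, _ => False
  end.

Definition app_word (A : Type) (w : list A) (v : word A) : word A :=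
  match v with
  | inl l => inl (w ++ l)
  | inr f => inr (fun n => match nth_error w n with
                           | Some a => a
                           | None => f (n - length w)%nat
                           end)
  end.

Definition prefix_set (A : Type) (w : list A) (S : word A -> Prop) : word A -> Prop :=
  fun u => exists v, S v /\ weq u (app_word w v).

Definition S_infty (A : Type) (S : word A -> Prop) : Prop :=
  (forall u, S u <-> False)
  \/ (exists w : list A, forall u, S u <-> weq u (inl w))
  \/ (exists w : list A, forall u, S u <-> prefix_set w (fun _ => True) u).

Definition meas_word (A : Type) : (word A -> Prop) -> Prop := generated (@S_infty A).

Record subprob (A : Type) := SubProb {
  msr :> (word A -> Prop) -> R;
  msr_nonneg : forall S, meas_word S -> 0 <= msr S;
  msr_empty : msr (fun _ => False) = 0;
  msr_sigma_add : forall F : nat -> word A -> Prop,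
      (forall n, meas_word (F n)) ->
      (forall n m u, n <> m -> F n u -> F m u -> False) ->
      Un_cv (fun N => sum_f_R0 (fun k => msr (F k)) N)
            (msr (fun u => exists n, F n u));
  msr_le1 : msr (fun _ => True) <= 1
}.

Definition meas_DA (A : Type) : (subprob A -> Prop) -> Prop :=
  generated (fun M => exists S B, meas_word S /\ borel B /\
                                  forall m : subprob A, M m <-> B (m S)).

Definition sumA (A : Type) (enumA : list A) (f : A -> R) : R :=
  fold_right (fun a acc => f a + acc) 0 enumA.

(** h : Y -> D A^oo is an F-coalgebra morphism from (Y, <b1, bs, tau>) to
    (D A^oo, Pi): h is measurable and Pi o h = F h o beta, i.e.
    h(y)(A^oo) = b1 y, h(y)({eps}) = bs y and (h y)_a = h (tau a y)
    (equality of measures = agreement on all measurable sets). *)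
Definition coalg_morphism (A Y : Type) (SY : (Y -> Prop) -> Prop)
  (b1 bs : Y -> R) (tau : A -> Y -> Y) (h : Y -> subprob A) : Prop :=
  measurable_fun SY (@meas_DA A) h
  /\ (forall y, h y (fun _ => True) = b1 y)
  /\ (forall y, h y (fun u => weq u (inl nil)) = bs y)
  /\ (forall y a S, meas_word S -> h y (prefix_set (a :: nil) S) = h (tau a y) S).

(* Main.v *)
Require Import Defs.
From Stdlib Require Import Reals List Lra Lia Classical ClassicalEpsilon FunctionalExtensionality PropExtensionality.
Open Scope R_scope.

Section Words.
Context {A : Type}.
Implicit Types (S T : word A -> Prop) (mu : (word A -> Prop) -> R).

Lemma weq_eq (u v : word A) : weq u v <-> u = v.
Proof.
  destruct u as [l|f], v as [l'|g]; simpl; split; intro H; try congruence; try contradiction.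
  apply f_equal, functional_extensionality; auto.
Qed.

Lemma app_nil (v : word A) : app_word nil v = v.
Proof.
  destruct v as [l|f]; simpl; auto.
  f_equal; apply functional_extensionality; intro n.
  destruct n; simpl; f_equal; lia.
Qed.

Lemma app_assoc_w (w t : list A) (v : word A) :
  app_word (w ++ t) v = app_word w (app_word t v).
Proof.
  destruct v as [l|f]; simpl.
  - rewrite app_assoc; auto.
  - f_equal; apply functional_extensionality; intro n.
    destruct (Nat.lt_ge_cases n (length w)) as [H|H].
    + rewrite nth_error_app1 by auto.
      destruct (nth_error w n) eqn:E; auto.
      apply nth_error_None in E; lia.
    + rewrite nth_error_app2 by auto.
      assert (E: nth_error w n = None) by (apply nth_error_None; auto).
      rewrite E, length_app.
      destruct (nth_error t (n - length w)); auto.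
      f_equal; lia.
Qed.

Lemma app_inj (w : list A) (v v' : word A) :
  app_word w v = app_word w v' -> v = v'.
Proof.
  destruct v as [l|f], v' as [l'|g]; simpl; intro H; try discriminate.
  - inversion H. f_equal. eapply app_inv_head; eauto.
  - inversion H as [H1]. f_equal. apply functional_extensionality; intro n.
    assert (Hn := f_equal (fun h => h (n + length w)%nat) H1). simpl in Hn.
    assert (E: nth_error w (n + length w) = None) by (apply nth_error_None; lia).
    rewrite E in Hn. replace (n + length w - length w)%nat with n in Hn by lia. auto.
Qed.

Lemma app1_head (a b : A) (v v' : word A) :
  app_word (a :: nil) v = app_word (b :: nil) v' -> a = b /\ v = v'.
Proof.
  intro H.
  assert (a = b).
  { destruct v as [l|f], v' as [l'|g]; simpl in H; try discriminate.
    - inversion H; auto.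
    - inversion H as [H1]. assert (Hn := f_equal (fun h => h 0%nat) H1). simpl in Hn. auto. }
  subst; split; auto. eapply app_inj; eauto.
Qed.

Lemma app_cons_w (a : A) (w : list A) (v : word A) :
  app_word (a :: w) v = app_word (a :: nil) (app_word w v).
Proof. rewrite <- app_assoc_w. reflexivity. Qed.

Lemma app_not_nil (a : A) (w : list A) (v : word A) : app_word (a :: w) v <> inl nil.
Proof. destruct v; simpl; discriminate. Qed.

Lemma app_inl (w : list A) (v : word A) (l : list A) :
  app_word w v = inl l -> exists l', v = inl l' /\ l = w ++ l'.
Proof. destruct v as [l'|f]; simpl; intro H; try discriminate. inversion H; eauto. Qed.

Lemma firstn_eq_nth (w v : list A) :
  (length w <= length v)%nat ->
  (forall n a b, nth_error w n = Some a -> nth_error v n = Some b -> a = b) ->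
  exists t, v = w ++ t.
Proof.
  revert v; induction w as [|a w IH]; intros v Hl Hn.
  - exists v; auto.
  - destruct v as [|b v]; simpl in Hl; [lia|].
    assert (a = b) by (apply (Hn 0%nat); auto). subst.
    destruct (IH v) as [t Ht]; [lia| |].
    + intros n x y H1 H2. apply (Hn (S n)); auto.
    + exists t; simpl; f_equal; auto.
Qed.

Lemma app_compar (w w' : list A) (v v' : word A) :
  app_word w v = app_word w' v' -> (exists t, w' = w ++ t) \/ (exists t, w = w' ++ t).
Proof.
  destruct v as [l|f], v' as [l'|g]; simpl; intro H; try discriminate.
  - inversion H as [H1]. destruct (app_eq_app _ _ _ _ H1) as [t [Ht|Ht]]; [right|left]; exists t; tauto.
  - inversion H as [H1].
    assert (Hk : forall n a b, (n < length w)%nat -> (n < length w')%nat ->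
        nth_error w n = Some a -> nth_error w' n = Some b -> a = b).
    { intros n a b _ _ Ea Eb. assert (Hn := f_equal (fun h => h n) H1). simpl in Hn.
      rewrite Ea, Eb in Hn. auto. }
    destruct (Nat.le_ge_cases (length w) (length w')) as [Hl|Hl].
    + left. apply firstn_eq_nth; auto. intros n a b Ea Eb.
      apply (Hk n a b); auto; [apply nth_error_Some; congruence|apply nth_error_Some; congruence].
    + right. apply firstn_eq_nth; auto. intros n a b Ea Eb. symmetry.
      apply (Hk n b a); auto; [apply nth_error_Some; congruence|apply nth_error_Some; congruence].
Qed.

Definition sing (w : list A) : word A -> Prop := fun u => u = inl w.
Definition cyl (w : list A) : word A -> Prop := fun u => exists v, u = app_word w v.

Lemma prefix_setE (w : list A) (S : word A -> Prop) :
  prefix_set w S = fun u => exists v, S v /\ u = app_word w v.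
Proof.
  apply functional_extensionality; intro u; apply propositional_extensionality.
  unfold prefix_set; split; intros [v [H1 H2]]; exists v; split; auto; apply weq_eq; auto.
Qed.

Lemma cylE (w : list A) : prefix_set w (fun _ => True) = cyl w.
Proof.
  rewrite prefix_setE. apply functional_extensionality; intro u; apply propositional_extensionality.
  unfold cyl; split; intros [v H]; exists v; tauto.
Qed.

Lemma sing_weq (w : list A) : (fun u => weq u (inl w)) = sing w.
Proof.
  apply functional_extensionality; intro u; apply propositional_extensionality.
  apply weq_eq.
Qed.

Lemma cyl_nil : cyl nil = fun _ => True.
Proof.
  apply functional_extensionality; intro u; apply propositional_extensionality.
  split; auto; intros _; exists u; rewrite app_nil; auto.
Qed.

Lemma meas_ext (S S' : word A -> Prop) : meas_word S -> (forall x, S x <-> S' x) -> meas_word S'.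
Proof. intros; eapply gen_ext; eauto. Qed.

Lemma meas_sing w : meas_word (sing w).
Proof. apply gen_base. right; left. exists w. intro u. unfold sing. rewrite weq_eq. tauto. Qed.

Lemma meas_cyl w : meas_word (cyl w).
Proof. apply gen_base. right; right. exists w. intro u. rewrite cylE. tauto. Qed.

Lemma meas_True : @meas_word A (fun _ : word A => True).
Proof. rewrite <- cyl_nil. apply meas_cyl. Qed.

Lemma meas_False : @meas_word A (fun _ : word A => False).
Proof. apply gen_empty. Qed.

Lemma meas_compl S : meas_word S -> meas_word (fun u => ~ S u).
Proof. apply gen_compl. Qed.

Lemma meas_union2 S T : meas_word S -> meas_word T -> meas_word (fun u => S u \/ T u).
Proof.
  intros HS HT.
  apply meas_ext with (fun u => exists n, (fun n => match n with O => S | _ => T end) n u).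
  - apply gen_union. intros [|n]; auto.
  - intro u; split; [intros [[|n] H]; auto|intros [H|H]; [exists O|exists 1%nat]; auto].
Qed.

Lemma meas_inter2 S T : meas_word S -> meas_word T -> meas_word (fun u => S u /\ T u).
Proof.
  intros HS HT. apply meas_ext with (fun u => ~ ((~ S u) \/ (~ T u))).
  - apply meas_compl, meas_union2; apply meas_compl; auto.
  - intro u; tauto.
Qed.

Definition sadd (mu : (word A -> Prop) -> R) : Prop :=
  mu (fun _ => False) = 0 /\
  forall F : nat -> word A -> Prop,
      (forall n, meas_word (F n)) ->
      (forall n m u, n <> m -> F n u -> F m u -> False) ->
      Un_cv (fun N => sum_f_R0 (fun k => mu (F k)) N) (mu (fun u => exists n, F n u)).

Lemma subprob_sadd (m : subprob A) : sadd m.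
Proof. split; [apply msr_empty|apply msr_sigma_add]. Qed.

Lemma Un_cv_eventually (u : nat -> R) (l c : R) (N0 : nat) :
  Un_cv u l -> (forall n, (n >= N0)%nat -> u n = c) -> l = c.
Proof.
  intros H Hc. apply UL_sequence with u; auto.
  intros e He. exists N0. intros n Hn. rewrite Hc by auto. unfold R_dist. rewrite Rminus_diag, Rabs_R0; auto.
Qed.

Lemma sadd_add2 mu S T : sadd mu -> meas_word S -> meas_word T ->
  (forall u, S u -> T u -> False) -> mu (fun u => S u \/ T u) = mu S + mu T.
Proof.
  intros [H0 Hs] HS HT Hd.
  set (F := fun n => match n with O => S | 1%nat => T | _ => fun _ : word A => False end).
  assert (HU : (fun u => exists n, F n u) = (fun u => S u \/ T u)).
  { apply functional_extensionality; intro u; apply propositional_extensionality.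
    split; [intros [[|[|n]] H]; simpl in H; auto; contradiction|intros [H|H]; [exists O|exists 1%nat]; auto]. }
  assert (Hc : Un_cv (fun N => sum_f_R0 (fun k => mu (F k)) N) (mu (fun u => S u \/ T u))).
  { rewrite <- HU. apply Hs.
    - intros [|[|n]]; simpl; auto. apply meas_False.
    - intros [|[|n]] [|[|k]] u Hnk H1 H2; simpl in *; try contradiction; try lia; eauto. }
  apply (Un_cv_eventually _ _ _ 1%nat Hc).
  intros n Hn. destruct n as [|n]; [lia|].
  induction n as [|n IH]; simpl; [lra|]. simpl in IH. rewrite IH by lia. rewrite H0; lra.
Qed.

Lemma sadd_compl mu S : sadd mu -> meas_word S ->
  mu (fun u => ~ S u) = mu (fun _ => True) - mu S.
Proof.
  intros Hm HS.
  assert (H := sadd_add2 mu S (fun u => ~ S u) Hm HS (meas_compl _ HS) (fun u h1 h2 => h2 h1)).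
  assert (E : (fun u => S u \/ ~ S u) = (fun _ : word A => True)).
  { apply functional_extensionality; intro u; apply propositional_extensionality. split; auto. intros _; apply classic. }
  change (mu (fun u => S u \/ ~ S u) = mu S + mu (fun u => ~ S u)) in H.
  rewrite E in H. lra.
Qed.

End Words.

Section Gen.
Context {A : Type}.
Implicit Types (S T : word A -> Prop) (mu : (word A -> Prop) -> R) (w t : list A) (u v : word A).

Lemma fext S T : (forall u, S u <-> T u) -> S = T.
Proof. intro H; apply functional_extensionality; intro u; apply propositional_extensionality; auto. Qed.

Lemma cyl_cons (a : A) w : cyl (a :: w) = prefix_set (a :: nil) (cyl w).
Proof.
  rewrite prefix_setE. apply fext; intro u; unfold cyl; split.
  - intros [t Ht]. exists (app_word w t); split; eauto. rewrite Ht. apply app_cons_w.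
  - intros [v [[t Ht] Hu]]. exists t. rewrite Hu, Ht. symmetry; apply app_cons_w.
Qed.

Lemma sing_cons (a : A) w : sing (a :: w) = prefix_set (a :: nil) (sing w).
Proof.
  rewrite prefix_setE. apply fext; intro u; unfold sing; split.
  - intros Hu. exists (inl w); split; auto.
  - intros [v [Hv Hu]]. subst. reflexivity.
Qed.

Lemma Sinf_cases S : S_infty S ->
  S = (fun _ => False) \/ (exists w, S = sing w) \/ (exists w, S = cyl w).
Proof.
  intros [H|[[w H]|[w H]]].
  - left; apply fext; auto.
  - right; left; exists w; apply fext; intro u; rewrite H; unfold sing; apply weq_eq.
  - right; right; exists w; rewrite <- cylE; apply fext; auto.
Qed.

Lemma Sinf_False : @S_infty A (fun _ : word A => False).
Proof. left; tauto. Qed.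
Lemma Sinf_sing w : S_infty (sing w).
Proof. right; left; exists w; intro u; unfold sing; rewrite weq_eq; tauto. Qed.
Lemma Sinf_cyl w : S_infty (cyl w).
Proof. right; right; exists w; intro u; rewrite cylE; tauto. Qed.

Lemma cyl_sub w t u : cyl (w ++ t) u -> cyl w u.
Proof. intros [v Hv]. exists (app_word t v). rewrite Hv; apply app_assoc_w. Qed.

Lemma Sinf_inter S T : S_infty S -> S_infty T -> S_infty (fun u => S u /\ T u).
Proof.
  intros HS HT.
  assert (Hsing : forall w T', S_infty (fun u => sing w u /\ T' u)).
  { intros w T'. destruct (classic (T' (inl w))) as [H|H].
    - replace (fun u => sing w u /\ T' u) with (sing w); [apply Sinf_sing|].
      apply fext; intro u; unfold sing; split; [intro; subst; auto|tauto].
    - replace (fun u => sing w u /\ T' u) with (fun _ : word A => False); [apply Sinf_False|].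
      apply fext; intro u; unfold sing; split; [tauto|intros [Hu HT']; subst; auto]. }
  destruct (Sinf_cases S HS) as [->|[[w ->]|[w ->]]].
  - replace (fun u : word A => False /\ T u) with (fun _ : word A => False); [apply Sinf_False|apply fext; tauto].
  - apply Hsing.
  - destruct (Sinf_cases T HT) as [->|[[w' ->]|[w' ->]]].
    + replace (fun u : word A => cyl w u /\ False) with (fun _ : word A => False); [apply Sinf_False|apply fext; tauto].
    + replace (fun u => cyl w u /\ sing w' u) with (fun u => sing w' u /\ cyl w u) by (apply fext; tauto).
      apply Hsing.
    + destruct (classic (exists u, cyl w u /\ cyl w' u)) as [[u [[v Hv] [v' Hv']]]|Hn].
      * rewrite Hv in Hv'. destruct (app_compar _ _ _ _ Hv') as [[t Ht]|[t Ht]].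
        -- replace (fun u => cyl w u /\ cyl w' u) with (cyl w'); [apply Sinf_cyl|].
           apply fext; intro x; split; [|tauto]. intro Hx; split; auto. rewrite Ht in Hx. eapply cyl_sub; eauto.
        -- replace (fun u => cyl w u /\ cyl w' u) with (cyl w); [apply Sinf_cyl|].
           apply fext; intro x; split; [|tauto]. intro Hx; split; auto. rewrite Ht in Hx. eapply cyl_sub; eauto.
      * replace (fun u => cyl w u /\ cyl w' u) with (fun _ : word A => False); [apply Sinf_False|].
        apply fext; intro x; split; [tauto|]. intro Hx; apply Hn; eauto.
Qed.

Lemma prefix_meas (a : A) S : meas_word S -> meas_word (prefix_set (a :: nil) S).
Proof.
  intro H; induction H as [S HS| |S HS IH|F HF IH|S S' HS IH Hext].
  - destruct (Sinf_cases S HS) as [->|[[w ->]|[w ->]]].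
    + apply meas_ext with (fun _ => False); [apply meas_False|].
      intro u; rewrite prefix_setE; split; [tauto|intros [v [[] _]]].
    + rewrite <- sing_cons; apply meas_sing.
    + rewrite <- cyl_cons; apply meas_cyl.
  - apply meas_ext with (fun _ => False); [apply meas_False|].
    intro u; rewrite prefix_setE; split; [tauto|intros [v [[] _]]].
  - apply meas_ext with (fun u => cyl (a :: nil) u /\ ~ prefix_set (a :: nil) S u).
    + apply meas_inter2; [apply meas_cyl|apply meas_compl; auto].
    + intro u; rewrite prefix_setE; split.
      * intros [[v Hv] Hn]. exists v; split; [intro HSv; apply Hn; eauto|apply weq_eq; auto].
      * intros [v [Hv Hu]]. apply weq_eq in Hu. split; [exists v; auto|]. intros [v' [Hv' Hu']].
        rewrite Hu in Hu'. apply app_inj in Hu'. subst; auto.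
  - apply meas_ext with (fun u => exists n, prefix_set (a :: nil) (F n) u).
    + apply gen_union; auto.
    + intro u; rewrite !prefix_setE; split.
      * intros [n [v [Hv Hu]]]. apply weq_eq in Hu. exists v; split; eauto.
      * intros [v [[n Hv] Hu]]. exists n, v; split; auto; apply weq_eq; auto.
  - replace S' with S; auto. apply fext; auto.
Qed.

Lemma prefix_disj (a : A) S T u : prefix_set (a :: nil) S u -> prefix_set (a :: nil) T u ->
  exists v, S v /\ T v.
Proof.
  rewrite !prefix_setE. intros [v [Hv Hu]] [v' [Hv' Hu']]. rewrite Hu in Hu'.
  apply app_inj in Hu'; subst; eauto.
Qed.

Lemma prefix_sadd (a : A) mu : sadd mu -> sadd (fun S => mu (prefix_set (a :: nil) S)).
Proof.
  intros [H0 Hs]; split.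
  - rewrite <- H0; f_equal; apply fext; intro u; rewrite prefix_setE; split; [intros [v [[] _]]|tauto].
  - intros F HF Hd.
    replace (prefix_set (a :: nil) (fun u => exists n, F n u))
      with (fun u => exists n, prefix_set (a :: nil) (F n) u).
    + apply Hs; [intro n; apply prefix_meas; auto|].
      intros n m u Hnm H1 H2. destruct (prefix_disj _ _ _ _ H1 H2) as [v [Hv1 Hv2]]. eauto.
    + apply fext; intro u; rewrite !prefix_setE; split.
      * intros [n [v [Hv Hu]]]. apply weq_eq in Hu. exists v; split; eauto.
      * intros [v [[n Hv] Hu]]. exists n, v; split; auto; apply weq_eq; auto.
Qed.

End Gen.

Section Coalg.
Context {A Y : Type} (b1 bs : Y -> R) (tau : A -> Y -> Y).

Fixpoint tw (y : Y) (w : list A) : Y :=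
  match w with nil => y | a :: w' => tw (tau a y) w' end.

Lemma gen_values (h : Y -> (word A -> Prop) -> R) :
  (forall y, h y (fun _ => True) = b1 y) ->
  (forall y, h y (fun u => weq u (inl nil)) = bs y) ->
  (forall y a S, meas_word S -> h y (prefix_set (a :: nil) S) = h (tau a y) S) ->
  forall w y, h y (cyl w) = b1 (tw y w) /\ h y (sing w) = bs (tw y w).
Proof.
  intros H1 H2 H3 w; induction w as [|a w IH]; intro y; simpl.
  - rewrite cyl_nil, <- sing_weq; auto.
  - rewrite cyl_cons, sing_cons, !H3 by (apply meas_cyl || apply meas_sing). apply IH.
Qed.

End Coalg.

Section Phi.
Context {A Y : Type} (enumA : list A) (b1 bs : Y -> R) (tau : A -> Y -> Y).

Definition Adec (a b : A) : {a = b} + {a <> b} := excluded_middle_informative (a = b).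

Fixpoint offl (l : list A) (y : Y) (acc : R) (a : A) : R :=
  match l with
  | nil => acc
  | b :: l' => if Adec b a then acc else offl l' y (acc + b1 (tau b y)) a
  end.

Fixpoint scan (l : list A) (y : Y) (x acc : R) : option A :=
  match l with
  | nil => None
  | b :: l' =>
      if Rle_dec acc x then
        if Rlt_dec x (acc + b1 (tau b y)) then Some b
        else scan l' y x (acc + b1 (tau b y))
      else scan l' y x (acc + b1 (tau b y))
  end.

Definition off (a : A) (y : Y) : R := offl enumA y (bs y) a.
Definition branch (y : Y) (x : R) : option A := scan enumA y x (bs y).

Fixpoint path (n : nat) (y : Y) (x : R) : option A :=
  match branch y x with
  | None => None
  | Some a => match n with O => Some a | S n' => path n' (tau a y) (x - off a y) end
  end.

Fixpoint fin (n : nat) (y : Y) (x : R) : list A :=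
  match n with
  | O => nil
  | S n' => match branch y x with
            | None => nil
            | Some a => a :: fin n' (tau a y) (x - off a y)
            end
  end.

Definition phi (y : Y) (x : R) : word A :=
  match excluded_middle_informative (exists n, path n y x = None) with
  | left H => inl (fin (S (proj1_sig (constructive_indefinite_description _ H))) y x)
  | right _ =>
      match branch y x with
      | Some a => inr (fun n => match path n y x with Some b => b | None => a end)
      | None => inl nil
      end
  end.

Lemma fin_stab (N : nat) : forall y x k, path N y x = None -> fin (S N + k) y x = fin (S N) y x.
Proof.
  induction N as [|N IH]; intros y x k H; simpl in H |- *.
  - destruct (branch y x); [discriminate|auto].
  - destruct (branch y x) as [a|]; auto.
    f_equal. apply (IH _ _ k H).
Qed.

Lemma fin_indep y x N M : path N y x = None -> path M y x = None -> fin (S N) y x = fin (S M) y x.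
Proof.
  intros HN HM. destruct (Nat.le_ge_cases N M) as [H|H].
  - replace (S M) with (S N + (M - N))%nat by lia. symmetry; apply fin_stab; auto.
  - replace (S N) with (S M + (N - M))%nat by lia. apply fin_stab; auto.
Qed.

Lemma phi_none y x : branch y x = None -> phi y x = inl nil.
Proof.
  intro H. unfold phi.
  destruct (excluded_middle_informative _) as [Hx|Hx].
  - destruct (constructive_indefinite_description _ Hx) as [N HN]; simpl. rewrite H; auto.
  - rewrite H; auto.
Qed.

Lemma path_S y x a n : branch y x = Some a -> path (S n) y x = path n (tau a y) (x - off a y).
Proof. intro H; simpl; rewrite H; auto. Qed.

Lemma phi_some y x a : branch y x = Some a ->
  phi y x = app_word (a :: nil) (phi (tau a y) (x - off a y)).
Proof.
  intro Hb. set (y' := tau a y). set (x' := x - off a y).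
  assert (HP : forall n, path (S n) y x = path n y' x') by (intro; apply path_S; auto).
  assert (H0 : path 0 y x = Some a) by (simpl; rewrite Hb; auto).
  unfold phi at 1.
  destruct (excluded_middle_informative (exists n, path n y x = None)) as [Hx|Hx].
  - destruct (constructive_indefinite_description _ Hx) as [N HN]; simpl.
    destruct N as [|N]; [congruence|]. rewrite HP in HN.
    rewrite Hb. unfold phi.
    destruct (excluded_middle_informative (exists n, path n y' x' = None)) as [Hy|Hy].
    + destruct (constructive_indefinite_description _ Hy) as [M HM]; simpl.
      f_equal. f_equal. apply fin_indep; auto.
    + exfalso; apply Hy; eauto.
  - rewrite Hb. unfold phi.
    destruct (excluded_middle_informative (exists n, path n y' x' = None)) as [Hy|Hy].
    + exfalso. destruct Hy as [n Hn]. apply Hx. exists (S n). rewrite HP; auto.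
    + assert (Hb' : branch y' x' <> None).
      { intro E. apply Hy. exists O. simpl. rewrite E. auto. }
      destruct (branch y' x') as [c|] eqn:Ec; [|congruence].
      simpl. f_equal. apply functional_extensionality; intro n.
      destruct n as [|n].
      * rewrite H0. reflexivity.
      * simpl nth_error. replace (S n - 1)%nat with n by lia.
        rewrite HP. destruct (path n y' x') eqn:Ep; [destruct n; reflexivity|exfalso; apply Hy; eauto].
Qed.

Hypothesis Hnn : forall y, 0 <= b1 y.
Hypothesis Hbsnn : forall y, 0 <= bs y.
Hypothesis HnodupA : NoDup enumA.
Hypothesis HfullA : forall a : A, In a enumA.
Hypothesis Hid : forall y, b1 y = bs y + sumA enumA (fun a => b1 (tau a y)).

Lemma sumA_nn (l : list A) y : 0 <= sumA l (fun a => b1 (tau a y)).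
Proof. induction l; simpl; [lra|]. specialize (Hnn (tau a y)). lra. Qed.

Lemma scan_lt l y x acc : x < acc -> scan l y x acc = None.
Proof.
  revert acc; induction l as [|b l IH]; intros acc H; simpl; auto.
  specialize (Hnn (tau b y)).
  destruct (Rle_dec acc x); [lra|]. apply IH; lra.
Qed.

Lemma offl_ge l y acc a : acc <= offl l y acc a.
Proof.
  revert acc; induction l as [|b l IH]; intros acc; simpl; [lra|].
  destruct (Adec b a); [lra|]. specialize (IH (acc + b1 (tau b y))). specialize (Hnn (tau b y)). lra.
Qed.

Lemma offl_le l y acc a : In a l ->
  offl l y acc a + b1 (tau a y) <= acc + sumA l (fun b => b1 (tau b y)).
Proof.
  revert acc; induction l as [|b l IH]; intros acc Hin; simpl; [contradiction|].
  assert (Hs := sumA_nn l y).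
  destruct (Adec b a) as [->|Hne]; [lra|].
  destruct Hin as [->|Hin]; [congruence|].
  specialize (IH (acc + b1 (tau b y)) Hin). lra.
Qed.

Lemma scan_some l y x acc a : NoDup l -> scan l y x acc = Some a ->
  In a l /\ offl l y acc a <= x < offl l y acc a + b1 (tau a y).
Proof.
  revert acc; induction l as [|b l IH]; intros acc Hnd H; simpl in H |- *; [discriminate|].
  inversion Hnd as [|b' l' Hnotin Hnd']; subst.
  assert (Hrec : scan l y x (acc + b1 (tau b y)) = Some a ->
     (b = a \/ In a l) /\ (if Adec b a then acc else offl l y (acc + b1 (tau b y)) a) <= x <
     (if Adec b a then acc else offl l y (acc + b1 (tau b y)) a) + b1 (tau a y)).
  { intro Hs. destruct (IH _ Hnd' Hs) as [Hin Hx]. split; auto.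
    destruct (Adec b a) as [->|]; [contradiction|auto]. }
  destruct (Rle_dec acc x) as [H1|H1]; [destruct (Rlt_dec x (acc + b1 (tau b y))) as [H2|H2]|]; auto.
  inversion H; subst. split; auto. destruct (Adec a a); [lra|congruence].
Qed.

Lemma scan_intro l y x acc a : In a l -> offl l y acc a <= x < offl l y acc a + b1 (tau a y) ->
  scan l y x acc = Some a.
Proof.
  revert acc; induction l as [|b l IH]; intros acc Hin Hx; simpl in Hx |- *; [contradiction|].
  destruct (Adec b a) as [->|Hne].
  - destruct (Rle_dec acc x); [|lra]. destruct (Rlt_dec x (acc + b1 (tau a y))); [auto|lra].
  - destruct Hin as [->|Hin]; [congruence|].
    assert (H := offl_ge l y (acc + b1 (tau b y)) a).
    assert (Hscan : scan l y x (acc + b1 (tau b y)) = Some a) by (apply IH; auto).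
    destruct (Rle_dec acc x); [destruct (Rlt_dec x (acc + b1 (tau b y)))|]; auto; lra.
Qed.

Lemma scan_exists l y x acc : acc <= x < acc + sumA l (fun b => b1 (tau b y)) ->
  scan l y x acc <> None.
Proof.
  revert acc; induction l as [|b l IH]; intros acc Hx; simpl in Hx |- *; [lra|].
  destruct (Rle_dec acc x); [destruct (Rlt_dec x (acc + b1 (tau b y)))|]; try discriminate; try lra.
  apply IH; lra.
Qed.

Lemma bs_le_b1 y : bs y <= b1 y.
Proof. rewrite (Hid y). assert (H := sumA_nn enumA y). lra. Qed.

Lemma off_bounds a y : bs y <= off a y /\ off a y + b1 (tau a y) <= b1 y.
Proof.
  unfold off. split; [apply offl_ge|]. rewrite (Hid y). apply offl_le; auto.
Qed.

Lemma branch_none_iff y x : 0 <= x < b1 y -> (branch y x = None <-> x < bs y).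
Proof.
  intro Hx. unfold branch. split.
  - intro H. destruct (Rlt_dec x (bs y)) as [H1|H1]; auto. exfalso.
    apply (scan_exists enumA y x (bs y)); auto. rewrite <- Hid. lra.
  - intro H. apply scan_lt; auto.
Qed.

Lemma branch_some_iff y x a : branch y x = Some a <-> off a y <= x < off a y + b1 (tau a y).
Proof.
  unfold branch, off. split.
  - intro H. apply (scan_some _ _ _ _ _ HnodupA H).
  - intro H. apply scan_intro; auto.
Qed.

Fixpoint lo (y : Y) (w : list A) : R :=
  match w with nil => 0 | a :: w' => off a y + lo (tau a y) w' end.

Definition E (y : Y) (S : word A -> Prop) (x : R) : Prop := 0 <= x < b1 y /\ S (phi y x).

Lemma app1_inl_cons (a b : A) w v : app_word (b :: nil) v = inl (a :: w) -> b = a /\ v = inl w.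
Proof. destruct v as [l|f]; simpl; intro H; inversion H; auto. Qed.

Lemma E_sing w : forall y x, E y (sing w) x <-> lo y w <= x < lo y w + bs (tw tau y w).
Proof.
  unfold E, sing. induction w as [|a w IH]; intros y x; simpl.
  - split.
    + intros [Hx Hp]. destruct (branch y x) as [b|] eqn:Eb.
      * rewrite (phi_some _ _ _ Eb) in Hp. destruct (phi (tau b y) (x - off b y)); simpl in Hp; discriminate.
      * apply branch_none_iff in Eb; auto. lra.
    + intros Hx. assert (H := bs_le_b1 y).
      assert (Hx' : 0 <= x < b1 y) by lra. split; auto.
      apply phi_none. apply branch_none_iff; auto; lra.
  - split.
    + intros [Hx Hp]. destruct (branch y x) as [b|] eqn:Eb.
      * rewrite (phi_some _ _ _ Eb) in Hp. apply app1_inl_cons in Hp. destruct Hp as [<- Hp].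
        apply branch_some_iff in Eb.
        assert (H : lo (tau b y) w <= x - off b y < lo (tau b y) w + bs (tw tau (tau b y) w)).
        { apply IH. split; auto. lra. }
        lra.
      * rewrite (phi_none _ _ Eb) in Hp. discriminate.
    + intros Hx.
      assert (H : 0 <= x - off a y < b1 (tau a y) /\ phi (tau a y) (x - off a y) = inl w).
      { apply IH. lra. }
      destruct H as [H1 H2].
      assert (Hb := off_bounds a y). assert (Hs := Hbsnn y).
      assert (Eb : branch y x = Some a) by (apply branch_some_iff; lra).
      split; [lra|]. rewrite (phi_some _ _ _ Eb), H2. reflexivity.
Qed.

Lemma cyl_app1 (a b : A) w v : cyl (a :: w) (app_word (b :: nil) v) <-> b = a /\ cyl w v.
Proof.
  unfold cyl. split.
  - intros [t Ht]. rewrite (app_cons_w a w t) in Ht. apply app1_head in Ht. destruct Ht as [-> ->]. eauto.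
  - intros [-> [t ->]]. exists t. rewrite (app_cons_w a w t). auto.
Qed.

Lemma E_cyl w : forall y x, E y (cyl w) x <-> lo y w <= x < lo y w + b1 (tw tau y w).
Proof.
  unfold E. induction w as [|a w IH]; intros y x; simpl.
  - rewrite cyl_nil. split; [intros [H _]; lra|intro; split; auto; lra].
  - split.
    + intros [Hx Hp]. destruct (branch y x) as [b|] eqn:Eb.
      * rewrite (phi_some _ _ _ Eb) in Hp. apply cyl_app1 in Hp. destruct Hp as [<- Hp].
        apply branch_some_iff in Eb.
        assert (H : lo (tau b y) w <= x - off b y < lo (tau b y) w + b1 (tw tau (tau b y) w)).
        { apply IH. split; auto. lra. }
        lra.
      * rewrite (phi_none _ _ Eb) in Hp. destruct Hp as [t Ht].
        symmetry in Ht. apply app_not_nil in Ht. contradiction.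
    + intros Hx.
      assert (H : 0 <= x - off a y < b1 (tau a y) /\ cyl w (phi (tau a y) (x - off a y))).
      { apply IH. lra. }
      destruct H as [H1 H2].
      assert (Hb := off_bounds a y). assert (Hs := Hbsnn y).
      assert (Eb : branch y x = Some a) by (apply branch_some_iff; lra).
      split; [lra|]. rewrite (phi_some _ _ _ Eb). apply cyl_app1; auto.
Qed.

End Phi.

Section Decomp.
Context {A : Type}.
Implicit Types (mu : (word A -> Prop) -> R) (l : list A).

Definition U l : word A -> Prop := fun u => exists a, In a l /\ cyl (a :: nil) u.

Lemma meas_U l : meas_word (U l).
Proof.
  induction l as [|a l IH].
  - apply meas_ext with (fun _ => False); [apply meas_False|]. intro u; unfold U; simpl; split; [tauto|intros [a [[] _]]].
  - apply meas_ext with (fun u => cyl (a :: nil) u \/ U l u).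
    + apply meas_union2; auto. apply meas_cyl.
    + intro u; unfold U; simpl; split.
      * intros [H|[b [Hb Hc]]]; [exists a; auto|exists b; auto].
      * intros [b [[->|Hb] Hc]]; [left; auto|right; exists b; auto].
Qed.

Lemma sumU mu l : sadd mu -> NoDup l -> mu (U l) = sumA l (fun a => mu (cyl (a :: nil))).
Proof.
  intros Hm; induction l as [|a l IH]; intro Hnd; simpl.
  - destruct Hm as [H0 _]. rewrite <- H0. f_equal. apply fext; intro u; unfold U; simpl.
    split; [intros [a [[] _]]|tauto].
  - inversion Hnd as [|a' l' Hnotin Hnd']; subst.
    replace (U (a :: l)) with (fun u => cyl (a :: nil) u \/ U l u).
    + rewrite sadd_add2; auto.
      * rewrite IH; auto.
      * apply meas_cyl.
      * apply meas_U.
      * intros u [v Hv] [b [Hb [v' Hv']]]. rewrite Hv in Hv'. apply app1_head in Hv'.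
        destruct Hv' as [-> _]. auto.
    + apply fext; intro u; unfold U; simpl; split.
      * intros [H|[b [Hb Hc]]]; [exists a; auto|exists b; auto].
      * intros [b [[->|Hb] Hc]]; [left; auto|right; exists b; auto].
Qed.

Lemma word_decomp (enumA : list A) : (forall a, In a enumA) ->
  (fun _ : word A => True) = (fun u => sing nil u \/ U enumA u).
Proof.
  intro Hfull. apply fext; intro u; split; [intros _|tauto].
  destruct u as [[|a l]|f].
  - left; reflexivity.
  - right. exists a; split; auto. exists (inl l). reflexivity.
  - right. exists (f 0%nat); split; auto. exists (inr (fun n => f (S n))).
    simpl. f_equal. apply functional_extensionality; intros [|m]; simpl; auto.
    destruct m; simpl; auto.
Qed.

Lemma sing_U_disj (enumA : list A) u : sing nil u -> U enumA u -> False.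
Proof.
  unfold sing, U. intros -> [a [_ [v Hv]]]. symmetry in Hv. apply app_not_nil in Hv. auto.
Qed.

Lemma sumA_ext l (f g : A -> R) : (forall a, f a = g a) -> sumA l f = sumA l g.
Proof. intro H; induction l; simpl; auto. rewrite H, IHl; auto. Qed.

End Decomp.

Lemma i_to_ii {A Y : Type} (enumA : list A) (HnodupA : NoDup enumA) (HfullA : forall a : A, In a enumA)
  (SY : (Y -> Prop) -> Prop) (b1 bs : Y -> R) (tau : A -> Y -> Y) (h : Y -> subprob A) :
  coalg_morphism SY b1 bs tau h ->
  forall y, b1 y = bs y + sumA enumA (fun a => b1 (tau a y)).
Proof.
  intros [_ [H1 [H2 H3]]] y.
  assert (Hg := gen_values b1 bs tau (fun y S => h y S) H1 H2 H3).
  rewrite <- H1, (word_decomp enumA HfullA).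
  rewrite sadd_add2; [| apply subprob_sadd | apply meas_sing | apply meas_U | apply sing_U_disj].
  rewrite sumU; [| apply subprob_sadd | auto].
  rewrite (proj2 (Hg nil y)). simpl. f_equal.
  apply sumA_ext; intro a. apply (proj1 (Hg (a :: nil) y)).
Qed.

Close Scope R_scope.
From HB Require Import structures.
From mathcomp Require Import all_boot all_order all_algebra.
From mathcomp Require Import all_classical all_reals.
From mathcomp Require Import Rstruct Rstruct_topology.
From mathcomp Require Import ereal topology normedtype sequences measure lebesgue_measure lebesgue_stieltjes_measure measurable_realfun.
Import Order.TTheory GRing.Theory Num.Theory.
Local Open Scope classical_set_scope.
Local Open Scope ring_scope.

Lemma Un_cv_cvg (u : nat -> R) (l : R) : Un_cv u l <-> ((u : nat -> R^o) @ \oo --> (l : R^o)).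
Proof.
split.
- move=> H; apply/cvgrPdist_lt => e /RltP e0. have [N HN] := H e e0. exists N => // n /= Nn.
  rewrite distrC. apply/RltP. apply: HN. change (N <= n)%coq_nat; exact/ssrnat.leP.
- move=> /cvgrPdist_lt H e /RltP e0. have [N _ HN] := H e e0.
  exists N => n Nn; have {}Nn : (N <= n)%N by exact/ssrnat.leP.
  rewrite /R_dist. have := HN n Nn. rewrite distrC. by move/RltP.
Qed.

Definition Rm : realType := R.

Definition Yp {Y : Type} (y0 : Y) : Type := Y.
HB.instance Definition _ (Y : Type) (y0 : Y) := gen_eqMixin (Yp y0).
HB.instance Definition _ (Y : Type) (y0 : Y) := gen_choiceMixin (Yp y0).
HB.instance Definition _ (Y : Type) (y0 : Y) := isPointed.Build (Yp y0) y0.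

Lemma borel_meas (B : R -> Prop) : borel B -> measurable (B : set (measurableTypeR R)).
Proof.
elim=> [S [a Ha]| |S _ IH|F _ IH|S S' _ IH Hext].
- have -> : S = `]-oo, a]%classic.
    apply/funext => x; apply/propext; rewrite Ha /= in_itv /=; split; [by move/RleP|by move/RleP].
  exact: measurable_itv.
- have -> : (fun _ : R => False) = set0 by []. exact: measurable0.
- have -> : (fun x => ~ S x) = ~` S by []. exact: measurableC.
- have -> : (fun x => exists n, F n x) = \bigcup_n F n.
    by apply/funext => x; apply/propext; split; [case=> n ?; exists n|case=> n _ ?; exists n].
  exact: bigcupT_measurable.
- have -> : S' = S by apply/funext => x; apply/propext; split => /Hext.
  exact: IH.
Qed.

Section Conv.
Variables (Y : Type) (y0 : Y) (SY : (Y -> Prop) -> Prop).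
Hypothesis HSY : Defs.sigma_algebra SY.
Let T := g_sigma_algebraType (SY : set (set (Yp y0))).

Lemma SY_salg : sigma_algebra setT (SY : set (set (Yp y0))).
Proof.
case: HSY => H0 [HC [HU HE]]; split.
- exact: H0.
- move=> A HA. apply: (HE (fun x => ~ A x)); first exact: HC.
  by move=> x; split; [move=> ?; split|case].
- move=> F HF. apply: (HE (fun x => exists n, F n x)); first exact: HU.
  by move=> x; split; [case=> n ?; exists n|case=> n _ ?; exists n].
Qed.

Lemma measT_SY (S : set T) : measurable S <-> SY S.
Proof.
have E : @measurable _ T = SY.
  rewrite /measurable /=. exact: (sigma_algebra_id SY_salg).
by rewrite E.
Qed.

Lemma mfun_to (f : Y -> R) : Defs.measurable_fun SY borel f -> measurable_fun setT (f : T -> Rm).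
Proof.
move=> Hf. apply: (measurability _ (RGenOInfty.measurableE R)).
move=> _ [_ [a ->] <-]. apply/measT_SY.
case: HSY => _ [HC [_ HE]].
have Hb : borel (fun x => Rle x a) by apply: gen_base; exists a.
apply: (HE (fun y => ~ Rle (f y) a)); first exact: (HC _ (Hf _ Hb)).
move=> y; rewrite /= in_itv /= andbT; split.
- by move/Rnot_le_lt/RltP.
- by case=> _ /RltP ? ?; lra.
Qed.

Lemma mfun_from (f : Y -> R) : measurable_fun setT (f : T -> Rm) -> Defs.measurable_fun SY borel f.
Proof.
move=> Hf B HB. have := Hf measurableT B (borel_meas B HB).
rewrite setTI => /measT_SY. by [].
Qed.

End Conv.

Section Dyn.
Context {A : Type}.

Lemma fextM (S T : word A -> Prop) : (forall u, S u <-> T u) -> S = T.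
Proof. by move=> H; apply/funext => u; apply/propext. Qed.

Lemma Sinf_True : S_infty (fun _ : word A => True).
Proof. right; right; exists nil => u. by rewrite cylE cyl_nil. Qed.

Lemma meas_gen (S : word A -> Prop) : meas_word S -> <<s setT, @S_infty A >> S.
Proof.
elim=> [S0 HS| |S0 _ IH|F _ IH|S0 S' _ IH Hext].
- exact: sub_sigma_algebra.
- exact: sigma_algebra0.
- have -> : (fun u => ~ S0 u) = setT `\` S0 by apply: fextM => u; split; [move=> ?; split|case].
  exact: sigma_algebraCD.
- have -> : (fun u => exists n, F n u) = \bigcup_n F n.
    by apply: fextM => u; split; [case=> n ?; exists n|case=> n _ ?; exists n].
  exact: sigma_algebra_bigcup.
- by have <- : S0 = S' by apply: fextM.
Qed.

Lemma dynkin_word (H : set (set (word A))) :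
  (forall S, S_infty S -> H S) ->
  H setT -> (forall S, H S -> H (~` S)) ->
  (forall F : nat -> set (word A), (forall n m u, n <> m -> F n u -> F m u -> False) ->
      (forall n, H (F n)) -> H (fun u => exists n, F n u)) ->
  forall S, meas_word S -> H S.
Proof.
move=> HG HT HC HU S HS.
have : <<s setT, @S_infty A >> `<=` H.
  apply: lambda_system_subset => //.
  - by move=> X Y HX HY; exact: Sinf_inter.
  - apply/dynkin_lambda_system; split => //.
    move=> F HF HFm.
    have -> : \bigcup_k F k = (fun u => exists n, F n u).
      by apply: fextM => u; split; [case=> n _ ?; exists n|case=> n ?; exists n].
    apply: HU => // n m u nm Hn Hm. apply: nm. apply: HF => //. by exists u.
by apply; exact: meas_gen.
Qed.

Lemma sadd_unique (mu1 mu2 : (word A -> Prop) -> R) :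
  sadd mu1 -> sadd mu2 ->
  (forall S, S_infty S -> mu1 S = mu2 S) ->
  forall S, meas_word S -> mu1 S = mu2 S.
Proof.
move=> H1 H2 HG S HS.
suff : [set S | meas_word S /\ mu1 S = mu2 S] S by case.
apply: dynkin_word => //.
- by move=> S0 HS0; split; [exact: gen_base|exact: HG].
- by split; [exact: meas_True|apply: HG; exact: Sinf_True].
- move=> S0 [HS0 E]; split; first exact: meas_compl.
  rewrite /setC (sadd_compl mu1 S0 H1 HS0) (sadd_compl mu2 S0 H2 HS0) E.
  by rewrite (HG _ Sinf_True).
- move=> F Hd HF; split; first by apply: gen_union => n; case: (HF n).
  have E : (fun k => mu1 (F k)) = (fun k => mu2 (F k)) by apply/funext => k; case: (HF k).
  apply: (UL_sequence (fun N => sum_f_R0 (fun k => mu1 (F k)) N)).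
  + by apply: H1.2 => // n; case: (HF n).
  + rewrite E. by apply: H2.2 => // n; case: (HF n).
Qed.

End Dyn.

Section MeasH.
Context {A Y : Type} (SY : (Y -> Prop) -> Prop) (HSY : Defs.sigma_algebra SY).

Lemma mfun_empty (f : Y -> R) : ~ inhabited Y -> Defs.measurable_fun SY borel f.
Proof.
move=> HY B _. case: HSY => H0 [_ [_ HE]]. apply: (HE _ _ H0) => y.
by split => // _; apply: HY; constructor.
Qed.

Lemma meas_h (h : Y -> subprob A) :
  (forall S, S_infty S -> Defs.measurable_fun SY borel (fun y => h y S)) ->
  forall S, meas_word S -> Defs.measurable_fun SY borel (fun y => h y S).
Proof.
move=> HG S HS.
case: (Classical_Prop.classic (inhabited Y)) => [[y0]|HY]; last exact: mfun_empty.
pose T := g_sigma_algebraType (SY : set (set (Yp y0))).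
apply: (@mfun_from Y y0 SY HSY).
suff : [set S | meas_word S /\ measurable_fun setT ((fun y => h y S) : T -> Rm)] S by case.
apply: dynkin_word => //.
- by move=> S0 HS0; split; [exact: gen_base|apply: (@mfun_to Y y0 SY HSY); exact: HG].
- by split; [exact: meas_True|apply: (@mfun_to Y y0 SY HSY); apply: HG; exact: Sinf_True].
- move=> S0 [HS0 Hm]; split; first exact: meas_compl.
  have -> : ((fun y => h y (~` S0)) : T -> Rm) = (fun y => h y setT) \- (fun y => h y S0).
    apply/funext => y. rewrite /setC (sadd_compl (h y) S0 (subprob_sadd (h y)) HS0). by [].
  apply: measurable_funB => //. apply: (@mfun_to Y y0 SY HSY); apply: HG; exact: Sinf_True.
- move=> F Hd HF; split; first by apply: gen_union => n; case: (HF n).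
  pose g := (fun N (y : T) => sum_f_R0 (fun k => h y (F k)) N) : (T -> Rm)^nat.
  apply: (@measurable_fun_cvg _ _ Rm setT g).
  + elim=> [|N IH]; first by case: (HF 0%N).
    rewrite /g /=. apply: measurable_funD => //. by case: (HF N.+1).
  + move=> y _. apply/Un_cv_cvg. rewrite /g. apply: msr_sigma_add => // n; by case: (HF n).
Qed.
End MeasH.

Lemma itv_co (a b : R) : (fun x => Rle a x /\ Rlt x b) = `[a, b[%classic.
Proof.
apply/funext => x; apply/propext; rewrite /= in_itv /=; split.
- by case=> /RleP -> /RltP ->.
- by case/andP => /RleP ? /RltP ?.
Qed.

Lemma leb_co (a b : R) : Rle a b ->
  lebesgue_measure (`[a, b[%classic : set (measurableTypeR R)) = (b - a)%:E.
Proof.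
move=> ab. rewrite lebesgue_measure_itv /=.
case: ifP => [_|/negbT]; first by rewrite -EFinB.
rewrite lte_fin -leNgt => /RleP ba. have -> : b = a by lra.
by rewrite subrr.
Qed.

Lemma sum_f_R0_big (f : nat -> R) N : sum_f_R0 f N = \sum_(0 <= i < N.+1) f i.
Proof.
elim: N => [|N IH]; first by rewrite big_nat1.
rewrite /= IH [RHS]big_nat_recr //.
Qed.

Lemma Un_cv_shift (v : nat -> R) l : Un_cv v l -> Un_cv (fun N => v (S N)) l.
Proof. intros H e He; destruct (H e He) as [N HN]; exists N; intros n Hn; apply HN; unfold ge in *; apply Nat.le_trans with n; auto. Qed.

Section Constr.
Context {A Y : Type} (enumA : list A) (b1 bs : Y -> R) (tau : A -> Y -> Y).
Hypothesis Hnn : forall y, Rle (IZR Z0) (b1 y).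
Hypothesis Hbsnn : forall y, Rle (IZR Z0) (bs y).
Hypothesis Hnd : NoDup enumA.
Hypothesis Hfull : forall a : A, In a enumA.
Hypothesis Hid : forall y, b1 y = Rplus (bs y) (sumA enumA (fun a => b1 (tau a y))).

Definition EE (y : Y) (S : word A -> Prop) : set (measurableTypeR R) := E enumA b1 bs tau y S.

Lemma EE_sing y w : EE y (sing w) = `[lo enumA b1 bs tau y w, lo enumA b1 bs tau y w + bs (tw tau y w)[%classic.
Proof.
rewrite -itv_co. apply/funext => x; apply/propext.
exact: (E_sing enumA b1 bs tau Hnn Hbsnn Hnd Hfull Hid).
Qed.

Lemma EE_cyl y w : EE y (cyl w) = `[lo enumA b1 bs tau y w, lo enumA b1 bs tau y w + b1 (tw tau y w)[%classic.
Proof.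
rewrite -itv_co. apply/funext => x; apply/propext.
exact: (E_cyl enumA b1 bs tau Hnn Hbsnn Hnd Hfull Hid).
Qed.

Lemma EE_True y : EE y (fun _ => True) = `[0, b1 y[%classic.
Proof.
rewrite -itv_co. apply/funext => x; apply/propext. rewrite /EE /E. by split; [case|].
Qed.

Lemma EE_meas y S : meas_word S -> measurable (EE y S).
Proof.
elim=> [S0 HS| |S0 _ IH|F _ IH|S0 S' _ IH Hext].
- case: (Sinf_cases S0 HS) => [->|[[w ->]|[w ->]]].
  + have -> : EE y (fun _ => False) = set0 by apply/funext => x; apply/propext; rewrite /EE /E; split => [[]|].
    exact: measurable0.
  + rewrite EE_sing; exact: measurable_itv.
  + rewrite EE_cyl; exact: measurable_itv.
- have -> : EE y (fun _ => False) = set0 by apply/funext => x; apply/propext; rewrite /EE /E; split => [[]|].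
  exact: measurable0.
- have -> : EE y (fun u => ~ S0 u) = EE y (fun _ => True) `\` EE y S0.
    apply/funext => x; apply/propext; rewrite /EE /E /=.
    split => [[H1 H2]|[[H1 _] H2]]; [split; [by split|by case]|split => // Hs; exact: H2].
  apply: measurableD => //. rewrite EE_True; exact: measurable_itv.
- have -> : EE y (fun u => exists n, F n u) = \bigcup_n EE y (F n).
    apply/funext => x; apply/propext; rewrite /EE /E /=.
    by split => [[? [n ?]]|[n _ [? ?]]]; [exists n|split => //; exists n].
  exact: bigcupT_measurable.
- by have <- : S0 = S' by apply/funext => u; apply/propext.
Qed.

Definition hm (y : Y) (S : word A -> Prop) : R := fine (lebesgue_measure (EE y S)).

Lemma hm_fin y S : meas_word S -> lebesgue_measure (EE y S) = (hm y S)%:E /\ Rle 0 (hm y S) /\ Rle (hm y S) (b1 y).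
Proof.
move=> HS.
have Hle : (lebesgue_measure (EE y S) <= (b1 y)%:E)%E.
  have <- : lebesgue_measure (EE y (fun _ => True)) = (b1 y)%:E.
    by rewrite EE_True leb_co // subr0.
  apply: le_measure; rewrite ?inE; [exact: EE_meas| |].
  + rewrite EE_True; exact: measurable_itv.
  + by move=> x [? _]; split.
have H0 : (0 <= lebesgue_measure (EE y S))%E by exact: measure_ge0.
have Hf : lebesgue_measure (EE y S) \is a fin_num.
  by rewrite ge0_fin_numE // (le_lt_trans Hle) // ltry.
have E1 : lebesgue_measure (EE y S) = (hm y S)%:E by rewrite /hm fineK.
split => //. rewrite E1 lee_fin in Hle. rewrite E1 lee_fin in H0.
by split; apply/RleP.
Qed.

Lemma hm_nonneg y S : meas_word S -> Rle 0 (hm y S).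
Proof. by move=> HS; case: (hm_fin y S HS) => _ []. Qed.

Lemma hm_empty y : hm y (fun _ => False) = 0.
Proof.
rewrite /hm. have -> : EE y (fun _ => False) = set0 by apply/funext => x; apply/propext; rewrite /EE /E; split => [[]|].
by rewrite measure0.
Qed.

Lemma hm_True y : hm y (fun _ => True) = b1 y.
Proof. by rewrite /hm EE_True leb_co //= subr0. Qed.

Lemma hm_le1 y : (forall y, Rle (b1 y) 1) -> Rle (hm y (fun _ => True)) 1.
Proof. by move=> H; rewrite hm_True. Qed.

Lemma hm_sigma y (F : nat -> word A -> Prop) :
  (forall n, meas_word (F n)) ->
  (forall n m u, n <> m -> F n u -> F m u -> False) ->
  Un_cv (fun N => sum_f_R0 (fun k => hm y (F k)) N) (hm y (fun u => exists n, F n u)).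
Proof.
move=> HF Hd.
have HU : EE y (fun u => exists n, F n u) = \bigcup_n EE y (F n).
  apply/funext => x; apply/propext; rewrite /EE /E /=.
  by split => [[? [n ?]]|[n _ [? ?]]]; [exists n|split => //; exists n].
have Hm : forall n, measurable (EE y (F n)) by move=> n; exact: EE_meas.
have Ht : trivIset setT (fun n => EE y (F n)).
  move=> n m _ _ [x [[_ H1] [_ H2]]]. apply: Classical_Prop.NNPP => nm. exact: (Hd n m _ nm H1 H2).
have Hs : (fun n => \sum_(0 <= i < n) lebesgue_measure (EE y (F i))) @ \oo -->
    lebesgue_measure (EE y (fun u => exists n, F n u)).
  rewrite HU. exact: (@measure_sigma_additive _ _ _ lebesgue_measure _ Hm Ht).
move: Hs. rewrite (hm_fin y _ (gen_union _ HF)).1 => /fine_cvg.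
move=> /Un_cv_cvg H. have {}H := Un_cv_shift _ _ H.
apply: (Un_cv_ext (fun N => fine (\sum_(0 <= i < N.+1) lebesgue_measure (EE y (F i))))) => //.
move=> N. rewrite sum_f_R0_big.
have -> : \sum_(0 <= i < N.+1) lebesgue_measure (EE y (F i)) = (\sum_(0 <= i < N.+1) hm y (F i))%:E.
  rewrite -sumEFin. apply: eq_bigr => i _. exact: (hm_fin y _ (HF i)).1.
by [].
Qed.

End Constr.

Lemma Rle_addr (a b : R) : Rle 0 b -> Rle a (a + b).
Proof. move=> H; change (Rle a (Rplus a b)); lra. Qed.

Section Final.
Context {A Y : Type} (enumA : list A) (b1 bs : Y -> R) (tau : A -> Y -> Y).
Hypothesis Hnn : forall y, Rle (IZR Z0) (b1 y).
Hypothesis Hbsnn : forall y, Rle (IZR Z0) (bs y).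
Hypothesis Hle1 : forall y, Rle (b1 y) (IZR (Zpos xH)).
Hypothesis Hnd : NoDup enumA.
Hypothesis Hfull : forall a : A, In a enumA.
Hypothesis Hid : forall y, b1 y = Rplus (bs y) (sumA enumA (fun a => b1 (tau a y))).

Definition hsub (y : Y) : subprob A :=
  @SubProb A (hm enumA b1 bs tau y)
    (fun S HS => hm_nonneg enumA b1 bs tau Hnn Hbsnn Hnd Hfull Hid y S HS)
    (hm_empty enumA b1 bs tau y)
    (fun F HF Hd => hm_sigma enumA b1 bs tau Hnn Hbsnn Hnd Hfull Hid y F HF Hd)
    (hm_le1 enumA b1 bs tau Hnn y Hle1).

Lemma hsub_sing y w : hsub y (sing w) = bs (tw tau y w).
Proof.
rewrite /= /hm (EE_sing enumA b1 bs tau Hnn Hbsnn Hnd Hfull Hid) leb_co /=.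
- by rewrite addrC addKr.
- exact: Rle_addr.
Qed.

Lemma hsub_cyl y w : hsub y (cyl w) = b1 (tw tau y w).
Proof.
rewrite /= /hm (EE_cyl enumA b1 bs tau Hnn Hbsnn Hnd Hfull Hid) leb_co /=.
- by rewrite addrC addKr.
- exact: Rle_addr.
Qed.

Lemma hsub_prefix y a S : meas_word S -> hsub y (prefix_set (a :: nil) S) = hsub (tau a y) S.
Proof.
apply: (sadd_unique (fun S => hsub y (prefix_set (a :: nil) S)) (hsub (tau a y))).
- exact: (prefix_sadd a _ (subprob_sadd (hsub y))).
- exact: subprob_sadd.
- move=> S0 HS0. case: (Sinf_cases S0 HS0) => [->|[[w ->]|[w ->]]].
  + rewrite msr_empty. have -> : prefix_set (a :: nil) (fun _ : word A => False) = (fun _ => False).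
      rewrite prefix_setE. apply/funext => u; apply/propext; split => [[v [[] _]]|[]].
    exact: msr_empty.
  + by rewrite -sing_cons !hsub_sing.
  + by rewrite -cyl_cons !hsub_cyl.
Qed.

Lemma tw_meas (SY : (Y -> Prop) -> Prop) :
  (forall a, Defs.measurable_fun SY SY (tau a)) -> forall w, Defs.measurable_fun SY SY (fun y => tw tau y w).
Proof.
move=> Ht; elim=> [|a w IH] /=; first by move=> B HB.
move=> B HB. exact: (Ht a _ (IH B HB)).
Qed.

Lemma hsub_morph (SY : (Y -> Prop) -> Prop) (HSY : Defs.sigma_algebra SY) :
  Defs.measurable_fun SY borel b1 -> Defs.measurable_fun SY borel bs ->
  (forall a, Defs.measurable_fun SY SY (tau a)) ->
  coalg_morphism SY b1 bs tau hsub.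
Proof.
move=> Hb1m Hbsm Htaum. split; [|split; [|split]].
- move=> M. elim=> [M0 [S [B [HS [HB HM]]]]| |M0 _ IH|F _ IH|M0 M' _ IH Hext].
  + have Hgen : forall S0, S_infty S0 -> Defs.measurable_fun SY borel (fun y => hsub y S0).
      move=> S0 HS0. case: (Sinf_cases S0 HS0) => [->|[[w ->]|[w ->]]].
      * move=> B0 HB0. case: HSY => H0 [HC [_ HE]].
        case: (Classical_Prop.classic (B0 0)) => HB00.
        -- apply: (HE (fun _ => ~ False)); first exact: (HC _ H0).
           move=> y; rewrite (msr_empty (hsub y)); split => // _ [].
        -- apply: (HE (fun _ : Y => False)); first exact: H0.
           move=> y; rewrite (msr_empty (hsub y)); split => //.
      * have -> : (fun y => hsub y (sing w)) = (fun y => bs (tw tau y w)) by apply/funext => y; exact: hsub_sing.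
        move=> B0 HB0. exact: (tw_meas SY Htaum w _ (Hbsm _ HB0)).
      * have -> : (fun y => hsub y (cyl w)) = (fun y => b1 (tw tau y w)) by apply/funext => y; exact: hsub_cyl.
        move=> B0 HB0. exact: (tw_meas SY Htaum w _ (Hb1m _ HB0)).
    have Hm := meas_h SY HSY hsub Hgen S HS.
    case: HSY => _ [_ [_ HE]]. apply: (HE _ _ (Hm _ HB)) => y. exact: iff_sym (HM (hsub y)).
  + by case: HSY.
  + by case: HSY => _ [HC _]; exact: HC.
  + by case: HSY => _ [_ [HU _]]; exact: HU.
  + by case: HSY => _ [_ [_ HE]]; exact: (HE _ _ IH).
- move=> y. exact: (hm_True enumA b1 bs tau Hnn).
- move=> y. by rewrite sing_weq hsub_sing.
- move=> y a S HS. exact: hsub_prefix.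
Qed.

End Final.

Close Scope ring_scope.
Close Scope classical_set_scope.
Import Defs.
Open Scope R_scope.

Theorem mainTheorem10
  (A : Type) (enumA : list A) (HnodupA : NoDup enumA) (HfullA : forall a : A, In a enumA)
  (Y : Type) (SY : (Y -> Prop) -> Prop) (HSY : sigma_algebra SY)
  (b1 bs : Y -> R) (tau : A -> Y -> Y)
  (Hb1I : forall y, 0 <= b1 y <= 1) (HbsI : forall y, 0 <= bs y <= 1)
  (Hb1m : measurable_fun SY borel b1) (Hbsm : measurable_fun SY borel bs)
  (Htaum : forall a, measurable_fun SY SY (tau a)) :
  ((exists h : Y -> subprob A, coalg_morphism SY b1 bs tau h)
   <-> (forall y, b1 y = bs y + sumA enumA (fun a => b1 (tau a y))))
  /\ (forall h1 h2 : Y -> subprob A,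
        coalg_morphism SY b1 bs tau h1 -> coalg_morphism SY b1 bs tau h2 ->
        forall y S, meas_word S -> h1 y S = h2 y S).
Proof.
  split; [split|].
  - intros [h Hh]. exact (i_to_ii enumA HnodupA HfullA SY b1 bs tau h Hh).
  - intro Hid.
    exists (hsub enumA b1 bs tau (fun y => proj1 (Hb1I y)) (fun y => proj1 (HbsI y))
              (fun y => proj2 (Hb1I y)) HnodupA HfullA Hid).
    apply hsub_morph; auto.
  - intros h1 h2 [_ [a1 [a2 a3]]] [_ [c1 [c2 c3]]] y S HS.
    apply (sadd_unique (h1 y) (h2 y)); [apply subprob_sadd|apply subprob_sadd| |exact HS].
    intros S0 HS0.
    assert (G1 := gen_values b1 bs tau (fun y S => h1 y S) a1 a2 a3).
    assert (G2 := gen_values b1 bs tau (fun y S => h2 y S) c1 c2 c3).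
    destruct (Sinf_cases S0 HS0) as [->|[[w ->]|[w ->]]].
    + rewrite (msr_empty (h1 y)) (msr_empty (h2 y)). reflexivity.
    + rewrite (proj2 (G1 w y)) (proj2 (G2 w y)). reflexivity.
    + rewrite (proj1 (G1 w y)) (proj1 (G2 w y)). reflexivity.
Qed.
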